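(* Let $\mathbbm k_{\mathrm{loc}}:=\mathbb Z[z^{\pm1}]\big[\tfrac1{1-z^i}:i\in\mathbb Z\setminus\{0\}\big]$. The K-theoretic residue map $\rho_{\mathsf K}\colon\mathbbm k_{\mathrm{loc}}\to\mathbb Z$ (the $z^0$-coefficient of $f_+-f_-$, where $f_+$, $f_-$ are the Laurent expansions of $f$ at $z=0$ and $z=\infty$) vanishes on $\mathbb Z[z^{\pm1}]$ and satisfies, for all integers $n\ge1$, $k\ge0$ and $0\le a<n$, $$\rho\Big(\frac{z^{nk+a}}{(1-z^n)^{k+1}}\Big)=\begin{cases}1&k=a=0,\\0&\text{otherwise}.\end{cases}$$ Moreover, $\rho_{\mathsf K}$ is the unique $\mathbb Z$-linear map $\rho\colon\mathbbm k_{\mathrm{loc}}\to\mathbb Z$ which vanishes on $\mathbb Z[z^{\pm1}]$ and satisfies these identities.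
   Context: These identities arise as the normalization condition $\rho(e(z\otimes\mathcal L)^{-1})=1$ (with $e=\wedge^\bullet_{-1}$) for line bundles $\mathcal L$ on weighted projective spaces $\mathbb P(n,\dots,n)$; a residue map in this sense is what governs the passage from the vertex algebra to the Lie algebra. For $f\in\mathbbm k_{\mathrm{loc}}$ the expansions $f_+\in\mathbb Z(\!(z)\!)$ and $f_-\in\mathbb Z(\!(z^{-1})\!)$ are the usual Laurent expansions of the rational function $f$. *)

(* Defs.v *)
From HB Require Import structures.
From mathcomp Require Import all_boot all_order all_algebra fraction.
From Stdlib Require Import ClassicalEpsilon.
Set Implicit Arguments. Unset Strict Implicit. Unset Printing Implicit Defensive.
Import Order.TTheory GRing.Theory Num.Theory.
Local Open Scope ring_scope.

(* The field of rational functions Q(z) = Frac(Z[z]). *)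
Definition ratfun := {fraction {poly int}}.

Definition tofracP (p : {poly int}) : ratfun := FracField.tofrac p.

Definition zz : ratfun := tofracP 'X.

Definition laurent_poly (g : ratfun) : Prop :=
  exists (P : {poly int}) (m : int), g = tofracP P * zz ^ m.

Definition kloc (f : ratfun) : Prop :=
  exists (g : ratfun) (s : seq int),
    laurent_poly g /\ all (fun i => i != 0) s /\
    f = g * \prod_(i <- s) (1 - zz ^ i)^-1.

Definition pcoef (P : {poly int}) (n : int) : int :=
  match n with Posz m => P`_m | Negz _ => 0 end.

(* the formal product Q * a of the polynomial Q with the (two-sided)
   coefficient sequence a equals P, coefficientwise *)
Definition prod_eq (P Q : {poly int}) (a : int -> int) : Prop :=
  forall n : int, \sum_(i < size Q) Q`_i * a (n - (i : nat)%:Z) = pcoef P n.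

(* a is the Laurent expansion of f at z = 0, i.e. f_+ in Z((z)):
   coefficients vanish for n << 0 and Q * f_+ = P for some f = P/Q *)
Definition expansion0 (f : ratfun) (a : int -> int) : Prop :=
  (exists N : int, forall n : int, n < N -> a n = 0) /\
  exists P Q : {poly int}, Q != 0 /\ f = tofracP P / tofracP Q /\ prod_eq P Q a.

(* b is the Laurent expansion of f at z = infinity, i.e. f_- in Z((z^{-1})) *)
Definition expansionInf (f : ratfun) (b : int -> int) : Prop :=
  (exists N : int, forall n : int, N < n -> b n = 0) /\
  exists P Q : {poly int}, Q != 0 /\ f = tofracP P / tofracP Q /\ prod_eq P Q b.

Definition rhoK_spec (f : ratfun) (r : int) : Prop :=
  exists a b, expansion0 f a /\ expansionInf f b /\ r = a 0 - b 0.

Definition rhoK (f : ratfun) : int :=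
  epsilon (inhabits (0 : int)) (rhoK_spec f).

(* a map rho : k_loc -> Z (given on all of Q(z), only values on k_loc matter)
   is Z-linear on k_loc *)
Definition Zlinear_on_kloc (rho : ratfun -> int) : Prop :=
  (forall f g, kloc f -> kloc g -> rho (f + g) = rho f + rho g) /\
  (forall (c : int) f, kloc f -> rho (c%:~R * f) = c * rho f).

Definition vanishes_on_laurent (rho : ratfun -> int) : Prop :=
  forall g, laurent_poly g -> rho g = 0.

Definition residue_identities (rho : ratfun -> int) : Prop :=
  forall n k a : nat, (0 < n)%N -> (a < n)%N ->
    rho (zz ^+ (n * k + a) / (1 - zz ^+ n) ^+ k.+1) =
    (if (k == 0%N) && (a == 0%N) then 1 else 0).

(* Main.v *)
Set Warnings "-notation-overridden,-ambiguous-paths,-deprecated".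
Require Import Defs.
From HB Require Import structures.
From mathcomp Require Import all_boot all_order all_algebra fraction.
From mathcomp Require Import zify ring lra.
From Stdlib Require Import ClassicalEpsilon.
Set Implicit Arguments. Unset Strict Implicit. Unset Printing Implicit Defensive.
Import Order.TTheory GRing.Theory Num.Theory.
Local Open Scope ring_scope.

Definition act (Q : {poly int}) (a : int -> int) (n : int) : int :=
  \sum_(i < size Q) Q`_i * a (n - (i : nat)%:Z).

Lemma act_widen (Q : {poly int}) (a : int -> int) (n : int) (m : nat) : (size Q <= m)%N ->
  act Q a n = \sum_(i < m) Q`_i * a (n - (i : nat)%:Z).
Proof.
move=> hm; rewrite /act (big_ord_widen m (fun i : nat => Q`_i * a (n - i%:Z))) //.
rewrite big_mkcond /=; apply: eq_bigr => i _.
by case: ltnP => // hi; rewrite nth_default // mul0r.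
Qed.

Lemma act_addp (Q R : {poly int}) (a : int -> int) (n : int) : act (Q + R) a n = act Q a n + act R a n.
Proof.
set m := maxn (size Q) (size R).
have hQ : (size Q <= m)%N by apply: leq_maxl.
have hR : (size R <= m)%N by apply: leq_maxr.
have hQR : (size (Q + R)%R <= m)%N by apply: (leq_trans (size_polyD _ _)).
rewrite (act_widen a n hQ) (act_widen a n hR) (act_widen a n hQR) -big_split /=.
by apply: eq_bigr => i _; rewrite coefD mulrDl.
Qed.

Lemma act_C (c : int) (a : int -> int) (n : int) : act c%:P a n = c * a n.
Proof.
rewrite (@act_widen _ _ _ 1); last by rewrite size_polyC leq_b1.
by rewrite big_ord1 /= coefC /= subr0.
Qed.

Lemma act_MX (Q : {poly int}) (a : int -> int) (n : int) : act (Q * 'X) a n = act Q a (n - 1).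
Proof.
rewrite (@act_widen _ _ _ (size Q).+1); last by rewrite (leq_trans (size_mul_leq _ _)) // size_polyX addn2.
rewrite big_ord_recl coefMX eqxx mul0r add0r /act; apply: eq_bigr => i _.
rewrite coefMX /= /bump /=; congr (_ * a _); lia.
Qed.

Lemma act_Cmul (c : int) (R : {poly int}) (a : int -> int) (n : int) :
  act (c%:P * R) a n = c * act R a n.
Proof.
have h : (size (c%:P * R)%R <= size R)%N.
  by rewrite mul_polyC size_scale_leq.
rewrite (act_widen a n h) /act mulr_sumr; apply: eq_bigr => i _.
by rewrite coefCM mulrA.
Qed.

Lemma act_mul (Q R : {poly int}) (a : int -> int) (n : int) :
  act (Q * R) a n = act Q (act R a) n.
Proof.
elim/poly_ind: Q n => [|Q c IH] n.
  by rewrite mul0r /act size_poly0 !big_ord0.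
rewrite mulrDl act_addp act_addp act_Cmul act_C.
by rewrite mulrAC act_MX act_MX IH.
Qed.

Lemma act_addseq (Q : {poly int}) (a b : int -> int) (n : int) :
  act Q (fun m => a m + b m) n = act Q a n + act Q b n.
Proof. by rewrite /act -big_split; apply: eq_bigr => i _; rewrite mulrDr. Qed.

Lemma act_scaleseq (Q : {poly int}) (c : int) (a : int -> int) (n : int) :
  act Q (fun m => c * a m) n = c * act Q a n.
Proof. by rewrite /act mulr_sumr; apply: eq_bigr => i _; rewrite mulrCA. Qed.

Lemma act_ext (Q : {poly int}) (a b : int -> int) (n : int) :
  (forall m, a m = b m) -> act Q a n = act Q b n.
Proof. by move=> h; rewrite /act; apply: eq_bigr => i _; rewrite h. Qed.

Lemma pcoefD (P R : {poly int}) n : pcoef (P + R) n = pcoef P n + pcoef R n.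
Proof. by case: n => [m|m] //=; rewrite coefD. Qed.

Lemma pcoefCM (c : int) (P : {poly int}) n : pcoef (c%:P * P) n = c * pcoef P n.
Proof. by case: n => [m|m] /=; rewrite ?coefCM ?mulr0. Qed.

Lemma pcoefMX (P : {poly int}) n : pcoef (P * 'X) n = pcoef P (n - 1).
Proof.
case: n => [[|m]|m].
- by rewrite /= coefMX.
- rewrite /= coefMX /=.
  by congr (P`_ _); lia.
- have -> : (Negz m - 1) = Negz m.+1 by lia.
  by [].
Qed.

Lemma act_pcoef (Q P : {poly int}) (n : int) :
  act Q (pcoef P) n = pcoef (Q * P) n.
Proof.
elim/poly_ind: Q n => [|Q c IH] n.
  by rewrite mul0r /act size_poly0 big_ord0; case: n => m /=; rewrite ?coef0.
rewrite act_addp act_C mulrDl pcoefD pcoefCM act_MX IH.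
by rewrite mulrAC pcoefMX.
Qed.

Lemma act_Xn (k : nat) (Q : {poly int}) (a : int -> int) (n : int) :
  act ('X^k * Q) a n = act Q a (n - k%:Z).
Proof.
elim: k n => [|k IH] n; first by rewrite expr0 mul1r subr0.
rewrite exprSr mulrAC act_MX IH; congr act; lia.
Qed.

Lemma act_1 (a : int -> int) (n : int) : act 1 a n = a n.
Proof. by rewrite -polyC1 act_C mul1r. Qed.


Lemma uniq0 (Q : {poly int}) (d : int -> int) (N : int) :
  Q != 0 -> (forall n, n < N -> d n = 0) -> (forall n, act Q d n = 0) ->
  forall n, d n = 0.
Proof.
move=> hQ hN hact n0; apply/eqP; apply/negPn/negP => hn0.
have ex1 : exists k : nat, d (N + k%:Z) != 0.
  have hge : N <= n0.
    by rewrite leNgt; apply/negP => /hN h; rewrite h eqxx in hn0.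
  exists `|n0 - N|%N; have -> : N + `|n0 - N|%N%:Z = n0.
    by lia.
  exact: hn0.
have ex2 : exists v : nat, Q`_v != 0.
  by exists (size Q).-1; rewrite -lead_coefE lead_coef_eq0.
case: (ex_minnP ex1) => L hL minL.
case: (ex_minnP ex2) => v hv minv.
have vlt : (v < size Q)%N.
  by rewrite ltnNge; apply/negP => h; rewrite nth_default in hv.
have := hact (N + L%:Z + v%:Z).
rewrite /act (bigD1 (Ordinal vlt)) //= big1 ?addr0.
  have -> : N + L%:Z + v%:Z - v%:Z = N + L%:Z by lia.
  by move/eqP; rewrite mulf_eq0 (negbTE hv) (negbTE hL).
move=> [i hi] /= hne.
case: (ltngtP i v) => hiv.
- have : Q`_i == 0.
    by apply/negPn/negP => h; have := minv i h; rewrite leqNgt hiv.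
  by move/eqP ->; rewrite mul0r.
- case: (ltP (N + L%:Z + v%:Z - i%:Z) N) => hlt.
    by rewrite hN ?mulr0.
  have hk : ((absz (N + L%:Z + v%:Z - i%:Z - N)%R) < L)%N.
    lia.
  have : d (N + (absz (N + L%:Z + v%:Z - i%:Z - N)%R)%:Z) == 0.
    by apply/negPn/negP => h; have := minL _ h; rewrite leqNgt hk.
  have -> : N + (absz (N + L%:Z + v%:Z - i%:Z - N)%R)%:Z = N + L%:Z + v%:Z - i%:Z by lia.
  by move/eqP ->; rewrite mulr0.
- by exfalso; move: hne; rewrite (_ : Ordinal hi = Ordinal vlt) ?eqxx //; apply: val_inj; rewrite /= hiv.
Qed.

Lemma uniqInf (Q : {poly int}) (d : int -> int) (N : int) :
  Q != 0 -> (forall n, N < n -> d n = 0) -> (forall n, act Q d n = 0) ->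
  forall n, d n = 0.
Proof.
move=> hQ hN hact n0; apply/eqP; apply/negPn/negP => hn0.
have ex1 : exists k : nat, d (N - k%:Z) != 0.
  have hge : n0 <= N.
    by rewrite leNgt; apply/negP => /hN h; rewrite h eqxx in hn0.
  exists (absz (N - n0)%R); have -> : N - (absz (N - n0)%R)%:Z = n0 by lia.
  exact: hn0.
case: (ex_minnP ex1) => L hL minL.
set D := (size Q).-1.
have hD : Q`_D != 0 by rewrite -lead_coefE lead_coef_eq0.
have Dlt : (D < size Q)%N.
  by rewrite ltnNge; apply/negP => h; rewrite nth_default in hD.
have := hact (N - L%:Z + D%:Z).
rewrite /act (bigD1 (Ordinal Dlt)) //= big1 ?addr0.
  have -> : N - L%:Z + D%:Z - D%:Z = N - L%:Z by lia.
  by move/eqP; rewrite mulf_eq0 (negbTE hD) (negbTE hL).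
move=> [i hi] /= hne.
have hiD : (i < D)%N.
  rewrite ltn_neqAle; apply/andP; split.
    by apply/negP => /eqP e; apply/(negP hne)/eqP/val_inj.
  by rewrite /D -ltnS prednK // (leq_ltn_trans _ hi).
case: (ltP N (N - L%:Z + D%:Z - i%:Z)) => hlt.
  by rewrite hN ?mulr0.
have hk : (absz (L%:Z - D%:Z + i%:Z)%R < L)%N by lia.
have : d (N - (absz (L%:Z - D%:Z + i%:Z)%R)%:Z) == 0.
  by apply/negPn/negP => h; have := minL _ h; rewrite leqNgt hk.
have -> : N - (absz (L%:Z - D%:Z + i%:Z)%R)%:Z = N - L%:Z + D%:Z - i%:Z by lia.
by move/eqP ->; rewrite mulr0.
Qed.

Lemma act_subseq (Q : {poly int}) (a b : int -> int) (n : int) :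
  act Q (fun m => a m - b m) n = act Q a n - act Q b n.
Proof.
rewrite /act -sumrB; apply: eq_bigr => i _; by rewrite mulrBr.
Qed.


Lemma frac_eq (P Q P' Q' : {poly int}) : Q != 0 -> Q' != 0 ->
  tofracP P / tofracP Q = tofracP P' / tofracP Q' -> Q' * P = Q * P'.
Proof.
move=> hQ hQ' e.
have hq : tofracP Q != 0 by rewrite /tofracP tofrac_eq0.
have hq' : tofracP Q' != 0 by rewrite /tofracP tofrac_eq0.
move/eqP: e; rewrite (eqr_div _ _ hq hq').
rewrite /tofracP -!tofracM tofrac_eq => /eqP.
by rewrite mulrC => ->; rewrite mulrC.
Qed.

Lemma exp0_uniq f a a' : expansion0 f a -> expansion0 f a' -> forall n, a n = a' n.
Proof.
move=> [[N hN] [P [Q [hQ [ef hP]]]]] [[N' hN'] [P' [Q' [hQ' [ef' hP']]]]] n.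
have e := frac_eq hQ hQ' (etrans (esym ef) ef').
apply/eqP; rewrite -subr_eq0; apply/eqP.
apply: (@uniq0 (Q' * Q) (fun m => a m - a' m) (Num.min N N')) => //.
- by rewrite mulf_neq0.
- by move=> m; rewrite lt_min => /andP [h1 h2]; rewrite hN // hN' // subr0.
- move=> m; rewrite act_subseq act_mul (act_ext _ _ hP) act_pcoef.
  by rewrite (mulrC Q' Q) act_mul (act_ext _ _ hP') act_pcoef e subrr.
Qed.

Lemma expInf_uniq f a a' : expansionInf f a -> expansionInf f a' -> forall n, a n = a' n.
Proof.
move=> [[N hN] [P [Q [hQ [ef hP]]]]] [[N' hN'] [P' [Q' [hQ' [ef' hP']]]]] n.
have e := frac_eq hQ hQ' (etrans (esym ef) ef').
apply/eqP; rewrite -subr_eq0; apply/eqP.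
apply: (@uniqInf (Q' * Q) (fun m => a m - a' m) (Num.max N N')) => //.
- by rewrite mulf_neq0.
- by move=> m; rewrite gt_max => /andP [h1 h2]; rewrite hN // hN' // subr0.
- move=> m; rewrite act_subseq act_mul (act_ext _ _ hP) act_pcoef.
  by rewrite (mulrC Q' Q) act_mul (act_ext _ _ hP') act_pcoef e subrr.
Qed.

Lemma spec_uniq f r r' : rhoK_spec f r -> rhoK_spec f r' -> r = r'.
Proof.
move=> [a [b [ha [hb ->]]]] [a' [b' [ha' [hb' ->]]]].
by rewrite (exp0_uniq ha ha') (expInf_uniq hb hb').
Qed.

Lemma act_coef (Q T : {poly int}) (a : int -> int) (n : nat) :
  (forall k, k < 0 -> a k = 0) -> (forall m : nat, (m <= n)%N -> a m = T`_m) ->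
  act Q a n = (Q * T)`_n.
Proof.
move=> hneg hpos.
rewrite (@act_widen Q a n (size Q + n.+1)) ?leq_addr // coefM.
rewrite (big_ord_widen (size Q + n.+1) (fun j => Q`_j * T`_(n - j))) ?leq_addl //.
rewrite [RHS]big_mkcond /=. apply: eq_bigr => [[i hi]] _ /=.
case: ltnP => hin.
  have hin' : (i <= n)%N by rewrite -ltnS.
  by rewrite subzn // hpos // leq_subr.
rewrite hneg ?mulr0 //; lia.
Qed.


Lemma coef_low (R T : {poly int}) (j m : nat) : T`_0 = 0 -> (m < j)%N ->
  (R * T ^+ j)`_m = 0.
Proof.
move=> hT hmj.
have eT : T = drop_poly 1 T * 'X^1.
  have := poly_take_drop 1 T.
  have -> : take_poly 1 T = 0.
    by apply/polyP => i; rewrite coef_take_poly coef0; case: i => //=.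
  by rewrite add0r.
by rewrite eT exprMn -exprM mulrA coefMXn mul1n hmj.
Qed.

Lemma exist0 (Q P : {poly int}) : Q`_0 \is a GRing.unit ->
  exists a : int -> int, (forall k, k < 0 -> a k = 0) /\ forall n, act Q a n = pcoef P n.
Proof.
move=> hu.
set u := Q`_0.
pose v : int := u^-1.
have hvu : v * u = 1 by rewrite /v mulVr.
pose T : {poly int} := 1 - v *: Q.
have hT0 : T`_0 = 0 by rewrite /T coefB coef1 coefZ hvu subrr.
pose S (m : nat) : {poly int} := \sum_(j < m.+1) T ^+ j.
pose R : {poly int} := v *: P.
pose a := fun k : int => match k with Posz m => (R * S m)`_m | Negz _ => 0 end.
have hneg : forall k, k < 0 -> a k = 0 by case.
have stab : forall m M, (m <= M)%N -> (R * S M)`_m = (R * S m)`_m.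
  move=> m; elim=> [|M IH] h.
    by have -> : m = 0%N by lia.
  case: (ltngtP m M.+1) => hm; last by rewrite hm.
    rewrite /S big_ord_recr /= mulrDr coefD -/(S M) IH ?coef_low ?addr0 //.
  by exfalso; lia.
have tele : forall m, (v *: Q) * S m = 1 - T ^+ m.+1.
  have e : v *: Q = 1 - T by rewrite /T opprB addrC subrK.
  rewrite e; elim=> [|m IH].
    by rewrite /S big_ord1 expr0 mulr1 expr1.
  rewrite /S big_ord_recr /= mulrDr -/(S m) IH mulrBl mul1r -exprS.
  by rewrite addrA subrK.
exists a; split => // -[m|m].
  rewrite (@act_coef Q (R * S m) a m hneg); last first.
    by move=> k hk /=; rewrite (stab k m hk).
  transitivity (P * ((v *: Q) * S m))`_m; first congr (_`_m).
    rewrite /R -!mul_polyC; move: (v%:P) (S m) => c s.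
    rewrite !mulrA (mulrC Q c) (mulrC P c) -!mulrA (mulrCA Q P).
    by rewrite mulrC (mulrC Q) mulrA.
  by rewrite tele mulrBr coefB coef_low // mulr1 subr0.
rewrite /act big1 // => i _; rewrite hneg ?mulr0 //; lia.
Qed.

Lemma act_shift (D : {poly int}) (c : int -> int) (s n : int) :
  act D (fun m => c (m + s)) n = act D c (n + s).
Proof. by rewrite /act; apply: eq_bigr => i _; congr (_ * c _); lia. Qed.

Lemma exist0X (k : nat) (D P : {poly int}) : D`_0 \is a GRing.unit ->
  exists a : int -> int, (exists N : int, forall n, n < N -> a n = 0) /\
    forall n, act ('X^k * D) a n = pcoef P n.
Proof.
move=> hu; have [c [hc hact]] := exist0 P hu.
exists (fun m => c (m + k%:Z)); split.
  by exists (- k%:Z) => n hn; apply: hc; lia.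
move=> n; rewrite act_Xn act_shift.
by have -> : n - k%:Z + k%:Z = n by lia.
Qed.

Lemma pcoef_rev (P : {poly int}) (e : nat) : (size P <= e.+1)%N ->
  forall n, pcoef (\poly_(k < e.+1) P`_(e - k)) (e%:Z - n) = pcoef P n.
Proof.
move=> hP [m|m].
  case: (leqP m e) => hm.
    have -> : e%:Z - m%:Z = Posz (e - m) by lia.
    by rewrite /= coef_poly ltnS leq_subr subKn.
  have -> : e%:Z - m%:Z = Negz (m - e).-1 by lia.
  by rewrite /= nth_default //; apply: leq_trans hP _.
have -> : e%:Z - Negz m = Posz (e + m.+1) by lia.
rewrite /= coef_poly; case: ifP => // h; exfalso; move: h; lia.
Qed.

Lemma existInf (Q P : {poly int}) (e : nat) : lead_coef Q \is a GRing.unit ->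
  (size P <= e.+1)%N ->
  exists b : int -> int, (forall n, e%:Z - (size Q).-1%:Z < n -> b n = 0) /\
    forall n, act Q b n = pcoef P n.
Proof.
move=> hu hP.
set d := (size Q).-1.
have hQ : Q != 0.
  by apply/eqP => h; move: hu; rewrite h lead_coef0 unitr0.
have hsQ : size Q = d.+1 by rewrite /d prednK // size_poly_gt0.
pose Qr : {poly int} := \poly_(j < d.+1) Q`_(d - j).
have hQr : Qr`_0 \is a GRing.unit by rewrite /Qr coef_poly /= subn0 -lead_coefE.
have [c [hc hact]] := exist0 (\poly_(k < e.+1) P`_(e - k)) hQr.
exists (fun m => c (e%:Z - d%:Z - m)); split.
  by move=> n hn; apply: hc; lia.
move=> n.
rewrite -(pcoef_rev hP) -hact (@act_widen Qr c _ d.+1) ?size_poly //.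
rewrite /act hsQ [RHS](reindex_inj rev_ord_inj) /=; apply: eq_bigr => [[i hi]] _ /=.
rewrite /Qr coef_poly.
have -> : (d.+1 - i.+1 < d.+1)%N by lia.
have -> : (d - (d.+1 - i.+1))%N = i by lia.
congr (_ * c _); lia.
Qed.

Definition rep (f : ratfun) : Prop :=
  exists (P : {poly int}) (k : nat) (D : {poly int}),
    f = tofracP P / tofracP ('X^k * D) /\
    D`_0 \is a GRing.unit /\ lead_coef D \is a GRing.unit.

Lemma rep_mul (f : ratfun) (N D' : {poly int}) : rep f ->
  D'`_0 \is a GRing.unit -> lead_coef D' \is a GRing.unit ->
  rep (f * (tofracP N / tofracP D')).
Proof.
move=> [P [k [D [ef [h0 hl]]]]] h0' hl'.
exists (P * N)%R, k, (D * D')%R; split; last split.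
- rewrite ef mulf_div /tofracP -!tofracM.
  by rewrite mulrA.
- by rewrite coef0M unitrM h0 h0'.
- by rewrite lead_coefM unitrM hl hl'.
Qed.

Lemma zzX (j : nat) : zz ^+ j = tofracP ('X^j).
Proof. by rewrite /zz /tofracP tofracXn. Qed.

Lemma rep_laurent (g : ratfun) : laurent_poly g -> rep g.
Proof.
move=> [G [[j|j] ->]].
  exists (G * 'X^j)%R, 0%N, 1%R; split; last split.
  - rewrite -exprnP zzX expr0 mulr1 /tofracP tofrac1 divr1 -tofracM.
    by [].
  - by rewrite coef1 unitr1.
  - by rewrite lead_coef1 unitr1.
exists G, j.+1, 1%R; split; last split.
- rewrite NegzE -exprnN zzX mulr1.
  by [].
- by rewrite coef1 unitr1.
- by rewrite lead_coef1 unitr1.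
Qed.

Lemma factor_rep (i : int) : i != 0 ->
  exists N D : {poly int}, (1 - zz ^ i)^-1 = tofracP N / tofracP D /\
    D`_0 \is a GRing.unit /\ lead_coef D \is a GRing.unit.
Proof.
case: i => [[|j]|j] // _.
  exists 1%R, (1 - 'X^(j.+1))%R; split; last split.
  - rewrite -exprnP zzX /tofracP tofrac1 tofracB tofrac1 div1r.
    by [].
  - by rewrite coefB coef1 coefXn /= subr0 unitr1.
  - rewrite -opprB lead_coefN.
    have -> : ('X^(j.+1) - 1 : {poly int}) = 'X^(j.+1) - 1%:P by rewrite polyC1.
    rewrite lead_coefXnsubC //.
exists ('X^(j.+1))%R, ('X^(j.+1) - 1)%R; split; last split.
- rewrite NegzE -exprnN zzX /tofracP tofracB tofrac1.
  set w := FracField.tofrac ('X^(j.+1)).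
  have hw : w != 0 by rewrite /w tofrac_eq0 monic_neq0 // monicXn.
  have -> : 1 - w^-1 = (w - 1) / w by rewrite mulrBl (divff hw) div1r.
  by rewrite invf_div.
- by rewrite coefB coef1 coefXn /= sub0r unitrN unitr1.
- have -> : ('X^(j.+1) - 1 : {poly int}) = 'X^(j.+1) - 1%:P by rewrite polyC1.
  by rewrite lead_coefXnsubC // unitr1.
Qed.

Lemma kloc_rep (f : ratfun) : kloc f -> rep f.
Proof.
move=> [g [s [hg [hs ->]]]].
have := rep_laurent hg; elim: s hs g {hg} => [|i s IH] hs g hg.
  by rewrite big_nil mulr1.
move: hs => /= /andP [hi hs].
rewrite big_cons mulrA; apply: IH => //.
have [N [D [-> [h0 hl]]]] := factor_rep hi.
exact: rep_mul.
Qed.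

Definition ratrep (f : ratfun) (a : int -> int) : Prop :=
  exists P Q : {poly int}, Q != 0 /\ f = tofracP P / tofracP Q /\ prod_eq P Q a.

Lemma ratrep_add f g a b : ratrep f a -> ratrep g b ->
  ratrep (f + g) (fun m => a m + b m).
Proof.
move=> [P [Q [hQ [ef hP]]]] [P' [Q' [hQ' [eg hP']]]].
have hq : tofracP Q != 0 by rewrite /tofracP tofrac_eq0.
have hq' : tofracP Q' != 0 by rewrite /tofracP tofrac_eq0.
exists (Q' * P + Q * P'), (Q * Q'); split; last split.
- by rewrite mulf_neq0.
- rewrite ef eg (addf_div _ _ hq hq') /tofracP -!tofracM -tofracD.
  by rewrite (mulrC P) (mulrC P').
- move=> n; change (act (Q * Q') (fun m => a m + b m) n = pcoef (Q' * P + Q * P') n).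
  rewrite act_addseq {1}(mulrC Q Q') !act_mul.
  have h1 : forall m, act Q a m = pcoef P m := hP.
  have h2 : forall m, act Q' b m = pcoef P' m := hP'.
  rewrite (act_ext _ _ h1) (act_ext _ _ h2) !act_pcoef pcoefD.
  by rewrite addrC.
Qed.

Lemma polyCint (c : int) : (c%:~R : {poly int}) = c%:P.
Proof. by rewrite -[c in RHS]intz (rmorph_int (@polyC int)). Qed.

Lemma ratrep_scale f a (c : int) : ratrep f a ->
  ratrep (c%:~R * f) (fun m => c * a m).
Proof.
move=> [P [Q [hQ [ef hP]]]].
exists (c%:P * P), Q; split; first exact: hQ; split.
- rewrite ef mulrA /tofracP tofracM.
  congr (_ * _ / _); rewrite -polyCint.
  by rewrite rmorph_int.
- move=> n; change (act Q (fun m => c * a m) n = pcoef (c%:P * P) n).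
  have h1 : forall m, act Q a m = pcoef P m := hP.
  by rewrite act_scaleseq h1 pcoefCM.
Qed.

Lemma spec_add f g r s : rhoK_spec f r -> rhoK_spec g s -> rhoK_spec (f + g) (r + s).
Proof.
move=> [a [b [[[N hN] ha] [[[M hM] hb] ->]]]] [a' [b' [[[N' hN'] ha'] [[[M' hM'] hb'] ->]]]].
exists (fun m => a m + a' m), (fun m => b m + b' m); split; last split.
- split; last exact: ratrep_add.
  exists (Num.min N N') => n; rewrite lt_min => /andP [h1 h2].
  by rewrite hN // hN' // addr0.
- split; last exact: ratrep_add.
  exists (Num.max M M') => n; rewrite gt_max => /andP [h1 h2].
  by rewrite hM // hM' // addr0.
- by rewrite opprD addrACA.
Qed.

Lemma spec_scale f r (c : int) : rhoK_spec f r -> rhoK_spec (c%:~R * f) (c * r).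
Proof.
move=> [a [b [[[N hN] ha] [[[M hM] hb] ->]]]].
exists (fun m => c * a m), (fun m => c * b m); split; last split.
- split; last exact: ratrep_scale.
  by exists N => n hn; rewrite hN // mulr0.
- split; last exact: ratrep_scale.
  by exists M => n hn; rewrite hM // mulr0.
- by rewrite mulrBr.
Qed.

Lemma rhoK_of f r : rhoK_spec f r -> rhoK f = r.
Proof.
move=> h; apply: (spec_uniq _ h).
exact: (epsilon_spec (inhabits (0 : int)) (rhoK_spec f) (ex_intro _ r h)).
Qed.

Lemma kloc_spec f : kloc f -> rhoK_spec f (rhoK f).
Proof.
move=> hf; have [P [k [D [ef [h0 hl]]]]] := kloc_rep hf.
have [a [[N hN] ha]] := exist0X k P h0.
have hlQ : lead_coef ('X^k * D) \is a GRing.unit.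
  by rewrite lead_coefM lead_coefXn mul1r.
have hQ : 'X^k * D != 0.
  by apply/eqP => h; move: hlQ; rewrite h lead_coef0 unitr0.
have [b [hb hbact]] := existInf (P := P) (e := size P) hlQ (leqnSn _).
suff hs : rhoK_spec f (a 0 - b 0) by rewrite (rhoK_of hs).
exists a, b; split; last split; last by [].
- by split; [exists N | exists P, ('X^k * D)].
- split; last by exists P, ('X^k * D).
  by exists ((size P)%:Z - (size ('X^k * D)).-1%:Z).
Qed.

Lemma pcoef_neg (P : {poly int}) k : k < 0 -> pcoef P k = 0.
Proof. by case: k. Qed.

Lemma pcoef_big (P : {poly int}) k : (size P)%:Z <= k -> pcoef P k = 0.
Proof. by case: k => //= m h; rewrite nth_default //; lia. Qed.

Lemma laurent_rep1 (g : ratfun) : laurent_poly g ->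
  exists (P : {poly int}) (k : nat), g = tofracP P / tofracP ('X^k).
Proof.
move=> [G [[j|j] ->]].
  exists (G * 'X^j)%R, 0%N.
  rewrite -exprnP zzX expr0 /tofracP tofrac1 divr1 -tofracM.
  by [].
exists G, j.+1.
rewrite NegzE -exprnN zzX.
by [].
Qed.

Lemma laurent_spec (g : ratfun) : laurent_poly g -> rhoK_spec g 0.
Proof.
move=> /laurent_rep1 [P [k ->]].
pose a := fun n : int => pcoef P (n + k%:Z).
have hX : 'X^k != 0 :> {poly int} by rewrite monic_neq0 // monicXn.
have hp : prod_eq P ('X^k) a.
  move=> n; change (act 'X^k a n = pcoef P n).
  by rewrite -(mulr1 'X^k) act_Xn act_1 /a; congr pcoef; lia.
exists a, a; split; last split; last by rewrite subrr.
- split; last by exists P, ('X^k).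
  by exists (- k%:Z) => n hn; rewrite /a pcoef_neg //; lia.
- split; last by exists P, ('X^k).
  by exists ((size P)%:Z) => n hn; rewrite /a pcoef_big //; lia.
Qed.

Lemma ident_spec (n k a : nat) : (0 < n)%N -> (a < n)%N ->
  rhoK_spec (zz ^+ (n * k + a) / (1 - zz ^+ n) ^+ k.+1)
    (if (k == 0%N) && (a == 0%N) then 1 else 0).
Proof.
move=> hn han.
pose P : {poly int} := 'X^(n * k + a).
pose Q : {poly int} := (1 - 'X^n) ^+ k.+1.
have ef : zz ^+ (n * k + a) / (1 - zz ^+ n) ^+ k.+1 = tofracP P / tofracP Q.
  by rewrite !zzX /P /Q /tofracP (tofracXn k.+1 (1 - 'X^n)) tofracB tofrac1.
have hQ0 : Q`_0 = 1.
  rewrite -horner_coef0 /Q horner_exp hornerE hornerN hornerXn hornerC expr0n.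
  have -> : (n == 0%N) = false by lia.
  by rewrite oppr0 addr0 expr1n.
have hl1 : lead_coef (1 - 'X^n : {poly int}) \is a GRing.unit.
  rewrite -opprB lead_coefN.
  have -> : ('X^n - 1 : {poly int}) = 'X^n - 1%:P by rewrite polyC1.
  by rewrite lead_coefXnsubC.
have hlQ : lead_coef Q \is a GRing.unit by rewrite /Q lead_coef_exp unitrX.
have hQ : Q != 0.
  by apply/eqP => h; move: hlQ; rewrite h lead_coef0 unitr0.
have hsQ : (size Q).-1 = (n * k.+1)%N.
  rewrite /Q size_exp -opprB size_opp size_Xn_sub_1 //=.
have hQ0u : Q`_0 \is a GRing.unit by rewrite hQ0 unitr1.
have [a0 [ha0 ha0act]] := exist0 P hQ0u.
have hsP : (size P <= (n * k + a).+1)%N by rewrite /P size_polyXn.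
have [b [hb hbact]] := existInf hlQ hsP.
have ea0 : a0 0 = P`_0.
  have := ha0act 0.
  rewrite (@act_coef Q (a0 0)%:P a0 0%N ha0); last first.
    move=> m hm; have e : m = 0%N by lia.
    by rewrite e coefC.
  by rewrite coefE hQ0 mul1r.
have eb0 : b 0 = 0.
  by apply: hb; rewrite hsQ; lia.
have -> : (if (k == 0%N) && (a == 0%N) then 1 else 0) = a0 0 - b 0.
  rewrite ea0 eb0 subr0 /P coefXn.
  have hz : (0%N == (n * k + a)%N) = (k == 0%N) && (a == 0%N).
    apply/idP/idP.
      by move=> /eqP h; apply/andP; split; apply/eqP; lia.
    by move=> /andP [/eqP -> /eqP ->]; rewrite muln0.
  by rewrite hz; case: ((k == 0%N) && (a == 0%N)).
exists a0, b; split; last split; last by [].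
- split; last by exists P, Q.
  by exists 0.
- split; last by exists P, Q.
  by exists ((n * k + a)%N%:Z - (size Q).-1%:Z).
Qed.

Lemma zz_neq0 : zz != 0.
Proof. by rewrite /zz /tofracP tofrac_eq0 polyX_eq0. Qed.

Lemma lp_shift (P : {poly int}) (m : int) (j : nat) :
  tofracP P * zz ^ m = tofracP (P * 'X^j) * zz ^ (m - j%:Z).
Proof.
rewrite /tofracP tofracM -/(tofracP _) -/(tofracP 'X^j) -zzX -mulrA.
by rewrite exprnP -(expfzDr _ _ zz_neq0) addrC subrK.
Qed.

Lemma lp_add f g : laurent_poly f -> laurent_poly g -> laurent_poly (f + g).
Proof.
move=> [P [m ->]] [P' [m' ->]].
set m0 := - (absz m)%:Z - (absz m')%:Z.
rewrite (lp_shift P m (absz (m - m0))) (lp_shift P' m' (absz (m' - m0))).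
have -> : m - (absz (m - m0))%:Z = m0 by rewrite /m0; lia.
have -> : m' - (absz (m' - m0))%:Z = m0 by rewrite /m0; lia.
exists (P * 'X^(absz (m - m0)) + P' * 'X^(absz (m' - m0)))%R, m0.
by rewrite /tofracP tofracD mulrDl.
Qed.

Lemma lp_mul f g : laurent_poly f -> laurent_poly g -> laurent_poly (f * g).
Proof.
move=> [P [m ->]] [P' [m' ->]].
exists (P * P')%R, (m + m').
rewrite (expfzDr _ _ zz_neq0) /tofracP tofracM -!/(tofracP _).
by rewrite mulrACA.
Qed.

Lemma lp_poly (P : {poly int}) : laurent_poly (tofracP P).
Proof. by exists P, 0; rewrite expr0z mulr1. Qed.

Lemma lp_zz (m : int) : laurent_poly (zz ^ m).
Proof. by exists 1%R, m; rewrite /tofracP tofrac1 mul1r. Qed.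

Lemma lp_int (c : int) : laurent_poly (c%:~R).
Proof.
exists (c%:P), 0; rewrite expr0z mulr1 /tofracP -polyCint.
by rewrite rmorph_int.
Qed.

Lemma lp_0 : laurent_poly 0.
Proof. by have := lp_int 0; rewrite mulr0z. Qed.

Lemma prod_nseq (K : nat) (x : int) (F : int -> ratfun) :
  \prod_(i <- nseq K x) F i = F x ^+ K.
Proof. by elim: K => [|K IH]; rewrite ?big_nil ?expr0 // big_cons IH exprS. Qed.

Lemma y_neq0 (N : nat) : (0 < N)%N -> 1 - zz ^+ N != 0.
Proof.
move=> hN; rewrite zzX /tofracP -tofrac1 -tofracB tofrac_eq0.
apply/eqP => /(congr1 (fun p : {poly int} => p`_0)).
by rewrite coefB coef1 coefXn coef0 /=; case: N hN.
Qed.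

Lemma kloc_C (L : ratfun) (N K : nat) : laurent_poly L -> (0 < N)%N ->
  kloc (L / (1 - zz ^+ N) ^+ K).
Proof.
move=> hL hN; exists L, (nseq K (N%:Z)); split => //; split.
  by rewrite all_nseq; case: K => //= _; case: N hN.
by rewrite prod_nseq exprnP exprVn.
Qed.

Lemma dvd_prod_abs (s : seq int) x : x \in s -> (absz x %| \prod_(i <- s) absz i)%N.
Proof.
elim: s => //= y s IH; rewrite inE big_cons => /orP [/eqP -> | /IH h].
  exact: dvdn_mulr.
exact: dvdn_mull.
Qed.

Lemma factor_lp (i : int) (N : nat) : i != 0 -> (0 < N)%N -> (absz i %| N)%N ->
  exists L, laurent_poly L /\ (1 - zz ^ i)^-1 = L / (1 - zz ^+ N).
Proof.
move=> hi hN /dvdnP [q eN].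
have key : forall j : nat, (0 < j)%N -> (j %| N)%N ->
    exists L, laurent_poly L /\ (1 - zz ^+ j)^-1 = L / (1 - zz ^+ N).
  move=> j hj /dvdnP [q' eq'].
  exists (\sum_(t < q') (zz ^+ j) ^+ t); split.
    elim: q' {eq'} => [|q' IHq]; first by rewrite big_ord0; apply: lp_0.
    rewrite big_ord_recr /=; apply: lp_add => //.
    by rewrite -exprM exprnP; apply: lp_zz.
  have hyj : 1 - zz ^+ j != 0 by apply: y_neq0.
  have hyN : 1 - zz ^+ N != 0 by apply: y_neq0.
  have e : 1 - zz ^+ N = (1 - zz ^+ j) * \sum_(t < q') (zz ^+ j) ^+ t.
    rewrite eq' mulnC exprM -opprB subrX1 -mulNr opprB.
    by [].
  rewrite e invfM mulrA mulrC mulrA mulVf; first by rewrite mul1r.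
  by apply: contraNneq hyN => h0; rewrite e h0 mulr0.
case: i hi eN => [j|j] hi eN.
  rewrite -exprnP; apply: key; first by move: hi; rewrite lt0n; apply: contra => /eqP ->.
  by rewrite eN dvdn_mull.
have hd : (j.+1 %| N)%N by rewrite eN dvdn_mull.
have [L [hL eL]] := key j.+1 isT hd.
exists (- (zz ^+ j.+1) * L); split.
  have hm1 : laurent_poly (-1 : ratfun) by have := lp_int (-1); rewrite mulrN1z.
  apply: lp_mul => //; rewrite -mulN1r; apply: lp_mul => //.
  by rewrite exprnP; apply: lp_zz.
have hw : zz ^+ j.+1 != 0 by rewrite expf_neq0 // zz_neq0.
have hyj : 1 - zz ^+ j.+1 != 0 by apply: y_neq0.
rewrite NegzE -exprnN.
have -> : 1 - (zz ^+ j.+1)^-1 = - (1 - zz ^+ j.+1) / zz ^+ j.+1.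
  by rewrite opprB mulrBl (divff hw) div1r.
rewrite invf_div mulNr invrN -mulNr eL mulrN mulNr mulrA.
by rewrite mulNr.
Qed.

Lemma prod_lp (N : nat) (s : seq int) : (0 < N)%N -> all (fun i => i != 0) s ->
  (forall x, x \in s -> (absz x %| N)%N) ->
  exists L, laurent_poly L /\
    \prod_(i <- s) (1 - zz ^ i)^-1 = L / (1 - zz ^+ N) ^+ (size s).
Proof.
move=> hN; elim: s => [|i s IH] /=.
  move=> _ _; exists 1; split; last by rewrite big_nil expr0 divr1.
  by have := lp_poly 1; rewrite /tofracP tofrac1.
move=> /andP [hi hs] hd.
have [L1 [hL1 e1]] := factor_lp hi hN (hd i (mem_head _ _)).
have hd' : forall x, x \in s -> (absz x %| N)%N.
  by move=> x hx; apply: hd; rewrite inE hx orbT.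
have [L [hL e]] := IH hs hd'.
exists (L1 * L); split; first exact: lp_mul.
by rewrite big_cons e1 e mulf_div exprS.
Qed.

Lemma kloc_form (f : ratfun) : kloc f ->
  exists L (N K : nat), laurent_poly L /\ (0 < N)%N /\ f = L / (1 - zz ^+ N) ^+ K.
Proof.
move=> [g [s [hg [hs ->]]]].
set N := \prod_(i <- s) absz i.
have hN : (0 < N)%N.
  rewrite /N; elim: s hs {N} => [|i s IH] /=; first by rewrite big_nil.
  move=> /andP [hi hs]; rewrite big_cons muln_gt0 IH // andbT absz_gt0 //.
have [L [hL e]] := prod_lp hN hs (fun x hx => dvd_prod_abs hx).
exists (g * L), N, (size s); split; first exact: lp_mul.
by split => //; rewrite e mulrA.
Qed.

Definition Cf (N K : nat) (L : ratfun) : ratfun := L / (1 - zz ^+ N) ^+ K.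

Lemma lin_add (rho : ratfun -> int) N K L1 L2 : Zlinear_on_kloc rho -> (0 < N)%N ->
  laurent_poly L1 -> laurent_poly L2 ->
  rho (Cf N K (L1 + L2)) = rho (Cf N K L1) + rho (Cf N K L2).
Proof.
move=> [hadd _] hN h1 h2; rewrite /Cf mulrDl hadd //; exact: kloc_C.
Qed.

Lemma lin_scale (rho : ratfun -> int) N K (c : int) L : Zlinear_on_kloc rho -> (0 < N)%N ->
  laurent_poly L -> rho (Cf N K (c%:~R * L)) = c * rho (Cf N K L).
Proof.
move=> [_ hsc] hN h; rewrite /Cf -mulrA hsc //; exact: kloc_C.
Qed.

Lemma Cf_rel (N K : nat) (j : int) : (0 < N)%N ->
  Cf N K.+1 (zz ^ j) = Cf N K.+1 (zz ^ (j - N%:Z)) + Cf N K ((-1)%:~R * zz ^ (j - N%:Z)).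
Proof.
move=> hN; rewrite /Cf.
have hy := y_neq0 hN.
have -> : zz ^ j = zz ^ (j - N%:Z) * zz ^+ N.
  by rewrite exprnP -(expfzDr _ _ zz_neq0) subrK.
move: (zz ^ (j - N%:Z)) => w.
set y := 1 - zz ^+ N.
have -> : zz ^+ N = 1 - y by rewrite /y opprB addrC subrK.
rewrite mulrN1z exprS.
have hyK : y ^+ K != 0 by apply: expf_neq0.
rewrite mulrBr mulr1 invfM mulrBl; congr (_ + _).
rewrite mulN1r mulrA (mulfK hy) mulNr.
reflexivity.
Qed.

Definition goodrho (rho : ratfun -> int) : Prop :=
  Zlinear_on_kloc rho /\ vanishes_on_laurent rho /\ residue_identities rho.

Lemma agree_step (rho1 rho2 : ratfun -> int) (N K : nat) :
  goodrho rho1 -> goodrho rho2 -> (0 < N)%N ->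
  (forall L, laurent_poly L -> rho1 (Cf N K L) = rho2 (Cf N K L)) ->
  forall j : int, rho1 (Cf N K.+1 (zz ^ j)) = rho2 (Cf N K.+1 (zz ^ j)).
Proof.
move=> [l1 [v1 i1]] [l2 [v2 i2]] hN IH.
pose D j := rho1 (Cf N K.+1 (zz ^ j)) - rho2 (Cf N K.+1 (zz ^ j)).
have hlm : forall m : int, laurent_poly ((-1)%:~R * zz ^ m).
  by move=> m; apply: lp_mul; [apply: lp_int | apply: lp_zz].
have rel : forall j, D j = D (j - N%:Z).
  move=> j; rewrite /D !(Cf_rel K j hN).
  have kA := kloc_C K.+1 (lp_zz (j - N%:Z)) hN.
  have kB := kloc_C K (hlm (j - N%:Z)) hN.
  rewrite (proj1 l1 _ _ kA kB) (proj1 l2 _ _ kA kB).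
  rewrite !lin_scale //; try exact: lp_zz.
  by rewrite (IH _ (lp_zz _)); ring.
have base : forall a : nat, (a < N)%N -> D (N * K + a)%N = 0.
  move=> a ha; rewrite /D /Cf -exprnP i1 // i2 //; exact: subrr.
have up : forall (b : int) (t : nat), D (b + (t * N)%N%:Z) = D b.
  move=> b; elim=> [|t IHt]; first by rewrite mul0n addr0.
  rewrite rel -IHt; congr D; nia.
have down : forall (b : int) (t : nat), D (b - (t * N)%N%:Z) = D b.
  move=> b; elim=> [|t IHt]; first by rewrite mul0n subr0.
  rewrite -IHt [RHS]rel; congr D; lia.
move=> j; apply/eqP; rewrite -subr_eq0; apply/eqP; rewrite -/(D j).
set r := ((j - (N * K)%N%:Z) %% N%:Z)%Z.
set q := ((j - (N * K)%N%:Z) %/ N%:Z)%Z.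
have hN0 : N%:Z != 0 by rewrite eqz_nat -lt0n.
have hr0 : 0 <= r by apply: modz_ge0.
have hrN : r < N%:Z by apply: ltz_pmod; rewrite ltz_nat.
have ej : j = (N * K + absz r)%N%:Z + q * N%:Z.
  have := divz_eq (j - (N * K)%N%:Z) N%:Z; rewrite -/r -/q; lia.
have hb : D (N * K + absz r)%N = 0 by apply: base; lia.
rewrite ej; case: q ej => t ej.
  have -> : Posz t * N%:Z = (t * N)%N%:Z by lia.
  by rewrite up.
have -> : (N * K + absz r)%N%:Z + Negz t * N%:Z =
  (N * K + absz r)%N%:Z - (t.+1 * N)%N%:Z by lia.
by rewrite down.
Qed.

Lemma agree (rho1 rho2 : ratfun -> int) : goodrho rho1 -> goodrho rho2 ->
  forall f, kloc f -> rho1 f = rho2 f.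
Proof.
move=> g1 g2 f /kloc_form [L [N [K [hL [hN ->]]]]].
change (rho1 (Cf N K L) = rho2 (Cf N K L)).
have [l1 [v1 i1]] := g1; have [l2 [v2 i2]] := g2.
elim: K L hL => [|K IH] L hL.
  by rewrite /Cf expr0 divr1 (v1 _ hL) (v2 _ hL).
move: hL => [P [m ->]].
elim/poly_ind: P m => [|P c IHP] m.
  have -> : Cf N K.+1 (tofracP 0 * zz ^ m) = 0.
    by rewrite /Cf /tofracP tofrac0 !mul0r.
  by rewrite (v1 _ lp_0) (v2 _ lp_0).
have -> : tofracP (P * 'X + c%:P) * zz ^ m = tofracP P * zz ^ (m + 1) + c%:~R * zz ^ m.
  rewrite /tofracP tofracD tofracM -/(tofracP 'X) -/zz mulrDl; congr (_ + _).
    by rewrite -mulrA (expfzDr _ _ zz_neq0) expr1z (mulrC zz).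
  by rewrite -polyCint rmorph_int.
have hA : laurent_poly (tofracP P * zz ^ (m + 1)) by apply: lp_mul; [apply: lp_poly | apply: lp_zz].
rewrite (lin_add K.+1 l1 hN hA (lp_mul (lp_int c) (lp_zz m))).
rewrite (lin_add K.+1 l2 hN hA (lp_mul (lp_int c) (lp_zz m))).
rewrite (lin_scale K.+1 c l1 hN (lp_zz m)) (lin_scale K.+1 c l2 hN (lp_zz m)).
by rewrite IHP (agree_step g1 g2 hN IH).
Qed.

Lemma rhoK_good : goodrho rhoK.
Proof.
split; last split.
- split.
    move=> f g hf hg.
    exact: rhoK_of (spec_add (kloc_spec hf) (kloc_spec hg)).
  move=> c f hf.
  exact: rhoK_of (spec_scale c (kloc_spec hf)).
- by move=> g hg; apply: rhoK_of; apply: laurent_spec.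
- by move=> n k a hn ha; apply: rhoK_of; apply: ident_spec.
Qed.

Theorem propositionA1 :
  (forall f, kloc f -> rhoK_spec f (rhoK f)) /\
  Zlinear_on_kloc rhoK /\
  vanishes_on_laurent rhoK /\
  residue_identities rhoK /\
  (forall rho : ratfun -> int,
     Zlinear_on_kloc rho -> vanishes_on_laurent rho -> residue_identities rho ->
     forall f, kloc f -> rho f = rhoK f).
Proof.
have [hl [hv hi]] := rhoK_good.
split; first exact: kloc_spec.
split; first exact: hl.
split; first exact: hv.
split; first exact: hi.
move=> rho l v i f hf.
exact: (agree (conj l (conj v i)) rhoK_good hf).
Qed.
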